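(* Let $k\ge 1$ and let $G$ be a graph obtained as a $k$-clique-sum of graphs $G_1$ and $G_2$, with common clique $K=\{v_1,\dots,v_k\}$. For $i=1,2$ let $G_i'=G_i\cap G$ (the subgraph of $G$ with vertex set $V(G_i)$ and edge set $E(G_i)\cap E(G)$). Let $\ell$ be an integer. Suppose that $G_1'$ has an AT-orientation $D_1'$ with $\Delta^+(D_1')\le \ell$, and that $G_2$ has an AT-orientation $D_2$ with $\Delta^+(D_2)\le\ell$ and $d^+_{D_2}(v_i)=i-1$ for $i=1,\dots,k$. Then $G$ has an AT-orientation $D$ such that $\Delta^+(D)\le\ell$ and $d_D^+(v)=d_{D_1'}^+(v)$ for every $v\in V(G_1)$.
   Context: All graphs are finite, simple and undirected. A clique of a graph is a nonempty vertex subset inducing a complete subgraph. Given vertex-disjoint graphs $G_1,G_2$, cliques $X_i\subset V(G_i)$ with $|X_1|=|X_2|=k$, and a bijection $f:X_1\to X_2$, a $k$-clique-sum of $G_1$ and $G_2$ is any graph obtained from $G_1\cup G_2$ by identifying $x$ with $f(x)$ for every $x\in X_1$ and then possibly deleting some edges of the resulting common clique. For an orientation $D$ of a graph, $d_D^+(v)$ is the out-degree of $v$ and $\Delta^+(D)$ the maximum out-degree. An Eulerian subdigraph of $D$ is a spanning subdigraph $H$ with $d_H^+(v)=d_H^-(v)$ for all vertices $v$ (including the one with no arcs); $EE(D)$ (resp. $OE(D)$) is the set of Eulerian subdigraphs with an even (resp. odd) number of arcs. An orientation $D$ is an AT-orientation if $|EE(D)|\ne|OE(D)|$. *)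

(* Defs.v *)
From mathcomp Require Import all_boot all_order all_algebra.
Set Implicit Arguments. Unset Strict Implicit. Unset Printing Implicit Defensive.

Section Defs.
Variable T : finType.

Definition sgraph (V : {set T}) (e : rel T) : Prop :=
  [/\ forall x y, e x y = e y x,
      forall x, ~~ e x x &
      forall x y, e x y -> (x \in V) && (y \in V)].

Definition is_clique (e : rel T) (K : {set T}) : Prop :=
  K != set0 /\ forall x y, x \in K -> y \in K -> x != y -> e x y.

(* d (a relation, d x y meaning arc x -> y) is an orientation of the graph e. *)
Definition is_orientation (e d : rel T) : Prop :=
  (forall x y, d x y -> e x y) /\ (forall x y, e x y -> d x y (+) d y x).

Definition arcs (d : rel T) : {set T * T} := [set p | d p.1 p.2].

Definition outdeg (d : rel T) (v : T) : nat := #|[set y | d v y]|.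

Definition eulerian (d : rel T) (H : {set T * T}) : bool :=
  (H \subset arcs d) &&
  [forall v, #|[set p in H | p.1 == v]| == #|[set p in H | p.2 == v]|].

Definition EE (d : rel T) : {set {set T * T}} :=
  [set H | eulerian d H & ~~ odd #|H|].
Definition OE (d : rel T) : {set {set T * T}} :=
  [set H | eulerian d H & odd #|H|].

Definition AT_orientation (d : rel T) : bool := #|EE d| != #|OE d|.

End Defs.

(* Main.v *)
Require Import Defs.
From mathcomp Require Import all_boot all_order all_algebra.
Import GRing.Theory Num.Theory.
Local Open Scope ring_scope.
Set Implicit Arguments. Unset Strict Implicit.

Section Aux.
Variable T : finType.
Implicit Types (d : rel T) (H : {set T * T}).

Definition bal H := [forall x, #|[set p in H | p.1 == x]| == #|[set p in H | p.2 == x]|].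
Lemma eulE d H : eulerian d H = (H \subset arcs d) && bal H.
Proof. by []. Qed.

Definition sgn d : int := \sum_(H | eulerian d H) (-1) ^+ #|H|.

Lemma ATE d : AT_orientation d = (sgn d != 0).
Proof.
rewrite /AT_orientation /sgn (bigID (fun H => odd #|H|)) /=.
rewrite (eq_bigr (fun _ => -1)); last by move=> H /andP[_ o]; rewrite -signr_odd o.
rewrite [X in _ + X](eq_bigr (fun _ => 1)); last by move=> H /andP[_ o]; rewrite -signr_odd (negbTE o).
rewrite (eq_bigl (fun H => H \in OE d)); last by move=> H; rewrite inE.
rewrite [X in _ + X](eq_bigl (fun H => H \in EE d)); last by move=> H; rewrite inE.
rewrite !sumr_const addrC mulNrn.
by rewrite subr_eq0 eqr_nat.
Qed.

Lemma pot (phi : T -> nat) H : bal H -> (forall p, p \in H -> (phi p.2 <= phi p.1)%N) ->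
  forall p, p \in H -> phi p.1 = phi p.2.
Proof.
move=> /forallP B le p pH.
have E : forall f : T * T -> T, (\sum_(q in H) phi (f q) = \sum_x #|[set q in H | f q == x]| * phi x)%N.
  move=> f; rewrite (partition_big f xpredT) //=; apply: eq_bigr => x _.
  rewrite -sum_nat_const; apply: eq_big => [q|q /andP[_ /eqP ->]//].
  by rewrite inE.
have S : (\sum_(q in H) phi q.2 = \sum_(q in H) phi q.1)%N.
  rewrite (E (fun q => q.2)) (E (fun q => q.1)); apply: eq_bigr => x _.
  by rewrite (eqP (B x)).
have L := @leqif_sum _ (mem H) (fun q => phi q.2 == phi q.1) (fun q => phi q.2) (fun q => phi q.1).
have := (L (fun q qH => leqif_eq (le q qH))).2.
rewrite S eqxx => /esym /forallP /(_ p) /implyP /(_ pH) /eqP.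
by [].
Qed.

Lemma sum_split (X : finType) (A B : {set X}) (F : {set X} -> int) : [disjoint A & B] ->
 \sum_(Y : {set X} | Y \subset A :|: B) F Y = \sum_(H1 : {set X} | H1 \subset A) \sum_(H2 : {set X} | H2 \subset B) F (H1 :|: H2).
Proof.
move=> dAB; rewrite pair_big_dep /=.
rewrite (reindex_onto (fun p : {set X} * {set X} => p.1 :|: p.2) (fun Y => (Y :&: A, Y :&: B))) /=.
  apply: eq_bigl => -[H1 H2] /=.
  apply/andP/andP => [[_ /eqP [e1 e2]]|[s1 s2]].
    by rewrite -e1 -e2 !subsetIr.
  rewrite subUset (subset_trans s1 (subsetUl _ _)) (subset_trans s2 (subsetUr _ _)); split=>//.
  rewrite !setIUl (setIidPl s1) (setIidPl s2).
  have -> : H2 :&: A = set0.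
    apply/setP=> x; rewrite !inE; apply/negP=> /andP[x2 xA].
    by move: dAB => /disjoint_setI0 /setP /(_ x); rewrite !inE xA (subsetP s2 _ x2).
  have -> : H1 :&: B = set0.
    apply/setP=> x; rewrite !inE; apply/negP=> /andP[x1 xB].
    by move: dAB => /disjoint_setI0 /setP /(_ x); rewrite !inE xB (subsetP s1 _ x1).
  by rewrite setU0 set0U.
by move=> Y sY; rewrite /= -setIUr (setIidPl sY).
Qed.

Lemma bal_union (S : {set T}) H1 H2 :
  (forall p, p \in H1 -> (p.1 \in S) && (p.2 \in S)) ->
  (forall p, p \in H2 -> (p.1 \notin S) && (p.2 \notin S)) ->
  bal (H1 :|: H2) = bal H1 && bal H2.
Proof.
move=> h1 h2.
have G : forall (f : T * T -> T), (forall p, p \in H1 -> f p \in S) -> (forall p, p \in H2 -> f p \notin S) ->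
  forall x, [set p in H1 :|: H2 | f p == x] = (if x \in S then [set p in H1 | f p == x] else [set p in H2 | f p == x])
   /\ [set p in (if x \in S then H2 else H1) | f p == x] = set0.
  move=> f s1 s2 x; split; apply/setP => p.
  { case xS: (x \in S); rewrite !inE; case p1: (p \in H1); case p2: (p \in H2) => //=;
    case: (f p =P x) => // fx.
    all: try by move: (s2 _ p2); rewrite fx xS.
    all: try by move: (s1 _ p1); rewrite fx xS.
    }
  case xS: (x \in S); rewrite !inE; apply/negP => /andP[pH /eqP fx].
    by move: (s2 _ pH); rewrite fx xS.
  by move: (s1 _ pH); rewrite fx xS.
have G1 := G fst (fun p pH => proj1 (andP (h1 p pH))) (fun p pH => proj1 (andP (h2 p pH))).
have G2 := G snd (fun p pH => proj2 (andP (h1 p pH))) (fun p pH => proj2 (andP (h2 p pH))).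
apply/forallP/andP => [B|[/forallP B1 /forallP B2] x].
  split; apply/forallP => x; have := B x; case: (G1 x) (G2 x) => [-> Z1] [-> Z2];
  move: Z1 Z2; case xS: (x \in S) => // -> -> _; exact: eqxx.
rewrite (proj1 (G1 x)) (proj1 (G2 x)).
by case: (x \in S); [apply: B1 | apply: B2].
Qed.
End Aux.

Lemma inarcs (T : finType) (d : rel T) p : (p \in arcs d) = d p.1 p.2.
Proof. by rewrite inE. Qed.

Theorem lemma2p3 (T : finType) (V1 V2 : {set T}) (G1 G2 G : rel T)
    (k : nat) (v : 'I_k -> T) (l : int) (d1 d2 : rel T) :
  (0 < k)%N ->
  injective v ->
  (* G1 on V1, G2 on V2, G on the whole vertex set V1 :|: V2 = T *)
  sgraph V1 G1 -> sgraph V2 G2 -> sgraph [set: T] G ->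
  V1 :|: V2 = [set: T] ->
  V1 :&: V2 = [set v i | i : 'I_k] ->
  is_clique G1 [set v i | i : 'I_k] ->
  is_clique G2 [set v i | i : 'I_k] ->
  (* G is a k-clique-sum of G1 and G2 along K = {v_1..v_k} *)
  (forall x y, G x y -> G1 x y || G2 x y) ->
  (forall x y, G1 x y || G2 x y ->
     ~~ ((x \in [set v i | i : 'I_k]) && (y \in [set v i | i : 'I_k])) -> G x y) ->
  (* D1' : AT-orientation of G1' = G1 /\ G, max outdegree <= l *)
  is_orientation (fun x y => G1 x y && G x y) d1 ->
  AT_orientation d1 ->
  (forall x, x \in V1 -> (outdeg d1 x)%:Z <= l) ->
  (* D2 : AT-orientation of G2, max outdegree <= l, outdeg(v_i) = i-1 *)
  is_orientation G2 d2 ->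
  AT_orientation d2 ->
  (forall x, x \in V2 -> (outdeg d2 x)%:Z <= l) ->
  (forall i : 'I_k, outdeg d2 (v i) = i :> nat) ->
  exists d : rel T,
    [/\ is_orientation G d,
        AT_orientation d,
        (forall x, (outdeg d x)%:Z <= l) &
        (forall x, x \in V1 -> outdeg d x = outdeg d1 x)].
Proof.
move=> k0 vinj [G1s G1i G1v] [G2s G2i G2v] [Gs Gi Gv] U I [_ K1] [_ K2] GG12 G12G
  [d1G d1o] AT1 l1 [d2G d2o] AT2 l2 deg2.
set K := [set v i | i : 'I_k] in I K1 K2 G12G.
have vK : forall i, v i \in K by move=> i; apply/imsetP; exists i.
have KV1 : forall x, x \in K -> x \in V1 by move=> x; rewrite -I inE => /andP[].
have KV2 : forall x, x \in K -> x \in V2 by move=> x; rewrite -I inE => /andP[].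
have nKV : forall x, x \in V2 -> x \notin K -> x \notin V1.
  by move=> x x2; apply: contra => x1; rewrite -I inE x1.
have inV2 : forall x, x \notin V1 -> x \in V2.
  move=> x x1; have : x \in V1 :|: V2 by rewrite U inE.
  by rewrite inE (negbTE x1).
have d1V : forall x y, d1 x y -> (x \in V1) && (y \in V1).
  by move=> x y /d1G /andP[/G1v].
have d2V : forall x y, d2 x y -> (x \in V2) && (y \in V2).
  by move=> x y /d2G /G2v.
have down : forall n (i : 'I_k), (i < n)%N -> forall y, d2 (v i) y -> exists2 j : 'I_k, (j < i)%N & y = v j.
  elim=> [//|n IH] i; rewrite ltnS => ilt y dy.
  have le : (i <= k)%N := ltnW (ltn_ord i).
  set S := [set v (widen_ord le j) | j : 'I_i].
  have cS : #|S| = i.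
    rewrite card_imset ?card_ord // => a b /vinj /(congr1 val) /= ab; exact: val_inj.
  have sub : S \subset [set y | d2 (v i) y].
    apply/subsetP => _ /imsetP[j _ ->]; rewrite inE.
    set w := widen_ord le j.
    have wi : (w < i)%N := ltn_ord j.
    have ne : v i != v w by apply/eqP => /vinj e; move: wi; rewrite -e ltnn.
    have e2 : G2 (v i) (v w) := K2 _ _ (vK i) (vK w) ne.
    have := d2o _ _ e2; case: (boolP (d2 (v w) (v i))) => [h|_]; last by rewrite addbF.
    have [j' lt e] := IH w (leq_trans wi ilt) (v i) h.
    exfalso; move: lt; rewrite -(vinj _ _ e).
    by rewrite ltnNge (ltnW wi).
  have yS : y \in S.
    by rewrite (subset_cardP (etrans cS (esym (deg2 i))) sub) inE.
  move: yS.
  by case/imsetP => j _ ->; exists (widen_ord le j) => //; exact: (ltn_ord j).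
have down' : forall (i : 'I_k) y, d2 (v i) y -> exists2 j : 'I_k, (j < i)%N & y = v j.
  by move=> i; apply: (down i.+1).
have d2K : forall x y, d2 x y -> x \in K -> y \in K.
  move=> x y dxy /imsetP[i _ xi]; move: dxy; rewrite xi => /down' [j _ ->]; exact: vK.
pose phi x := if [pick i | v i == x] is Some i then val i else k.
have phiv : forall i, phi (v i) = i.
  move=> i; rewrite /phi; case: pickP => [j /eqP /vinj -> //|H].
  by have := H i; rewrite eqxx.
have phiout : forall x, x \notin K -> phi x = k.
  move=> x xK; rewrite /phi; case: pickP => [j /eqP e|//].
  by move: xK; rewrite -e vK.
pose d2' x y := [&& d2 x y, x \notin K & y \notin K].
have E2 : forall H, eulerian d2 H = eulerian d2' H.
  move=> H; rewrite !eulE; case B: (bal H); rewrite ?andbF ?andbT //.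
  apply/idP/idP => sub; last first.
    by apply: (subset_trans sub); apply/subsetP => p; rewrite !inarcs => /and3P[].
  apply/subsetP => p pH; have := subsetP sub p pH; rewrite !inarcs => dp.
  have le : forall q, q \in H -> (phi q.2 <= phi q.1)%N.
    move=> q /(subsetP sub); rewrite inarcs.
    case: q => x y /= dq.
    case xK: (x \in K).
      move: xK dq => /imsetP[i _ ->] /down' [j ji ->]; rewrite !phiv; exact: ltnW.
    case yK: (y \in K); last by rewrite !phiout ?xK ?yK.
    move: yK => /imsetP[j _ ->]; rewrite phiv phiout ?xK //; exact: ltnW.
  have := pot B le pH; case: p pH dp => x y /= pH dp.
  rewrite /d2' dp /=.
  case xK: (x \in K).
    by move: xK dp => /imsetP[i _ ->] /down' [j ji ->]; rewrite !phiv => e; move: ji; rewrite e ltnn.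
  case yK: (y \in K) => //.
  by move: yK => /imsetP[j _ ->]; rewrite phiv phiout ?xK // => e; move: (ltn_ord j); rewrite -e ltnn.
have S2 : sgn d2 = sgn d2' by apply: eq_bigl => H; rewrite E2.
pose D x y := d1 x y || (d2 x y && (x \notin K)).
have DV1 : forall x y, x \in V1 -> D x y = d1 x y.
  move=> x y x1; rewrite /D; case d: (d2 x y) => /=; last by rewrite orbF.
  have [x2 _] := andP (d2V _ _ d).
  have xK : x \in K by rewrite -I inE x1 x2.
  by rewrite xK orbF.
have DnV1 : forall x y, x \notin V1 -> D x y = d2 x y.
  move=> x y x1; rewrite /D; case d: (d1 x y) => /=.
    by have := d1V _ _ d; rewrite (negbTE x1).
  have xK : x \notin K by apply: contra x1; apply: KV1.
  by rewrite xK andbT.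
exists D; split.
- split=> [x y|x y Gxy].
    rewrite /D => /orP[/d1G /andP[] //|/andP[dxy xK]].
    apply: G12G; first by rewrite (d2G _ _ dxy) orbT.
    by rewrite negb_and xK.
  case/orP: (GG12 _ _ Gxy) => [g1|g2].
    have [x1 y1] := andP (G1v _ _ g1).
    by rewrite !DV1 //; apply: d1o; rewrite g1 Gxy.
  have [x2 y2] := andP (G2v _ _ g2).
  case x1: (x \in V1); case y1: (y \in V1).
  + have xK : x \in K by rewrite -I inE x1 x2.
    have yK : y \in K by rewrite -I inE y1 y2.
    rewrite !DV1 //; apply: d1o; rewrite Gxy andbT.
    by apply: K1 => //; apply/eqP => e; move: (Gi y); rewrite -{1}e Gxy.
  + have xK : x \in K by rewrite -I inE x1 x2.
    rewrite DV1 // DnV1 ?y1 //.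
    have -> : d1 x y = false by apply/negP => /d1V /andP[_]; rewrite y1.
    have d2f : d2 x y = false by apply/negP => /d2K /(_ xK) /KV1; rewrite y1.
    by move: (d2o _ _ g2); rewrite d2f.
  + have yK : y \in K by rewrite -I inE y1 y2.
    rewrite DnV1 ?x1 // DV1 //.
    have -> : d1 y x = false by apply/negP => /d1V /andP[_]; rewrite x1.
    have d2f : d2 y x = false by apply/negP => /d2K /(_ yK) /KV1; rewrite x1.
    by move: (d2o _ _ g2); rewrite d2f.
  + by rewrite !DnV1 ?x1 ?y1 //; apply: d2o.
- rewrite ATE.
  have dis : [disjoint arcs d1 & arcs d2'].
    rewrite -setI_eq0; apply/eqP/setP => p; rewrite !inE.
    apply/negP => /andP[/d1V /andP[x1 _] /and3P[dp xK _]].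
    by move: (nKV _ (proj1 (andP (d2V _ _ dp))) xK); rewrite x1.
  have eulsub : forall H, eulerian D H -> H \subset arcs d1 :|: arcs d2'.
    move=> H; rewrite eulE => /andP[sub B'].
    pose psi x := (x \notin V1 : nat).
    have le : forall q, q \in H -> (psi q.2 <= psi q.1)%N.
      move=> [x y] /(subsetP sub); rewrite inarcs /= /D => /orP[/d1V /andP[x1 y1]|/andP[dxy xK]].
        by rewrite /psi x1 y1.
      by rewrite /psi (nKV _ (proj1 (andP (d2V _ _ dxy))) xK); case: (y \notin V1).
    apply/subsetP => -[x y] pH; have := pot B' le pH; have := subsetP sub _ pH.
    rewrite inarcs /= /D inE !inarcs /= => /orP[-> //|/andP[dxy xK]].
    rewrite /psi (nKV _ (proj1 (andP (d2V _ _ dxy))) xK) => e.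
    have y1 : y \notin V1 by move: e; case: (y \notin V1).
    apply/orP; right; rewrite /d2' dxy xK /=.
    by apply: contra y1; apply: KV1.
  have euni : forall H1 H2 : {set T * T}, H1 \subset arcs d1 -> H2 \subset arcs d2' ->
      eulerian D (H1 :|: H2) = eulerian d1 H1 && eulerian d2' H2.
    move=> H1 H2 s1 s2; rewrite !eulE s1 s2 /=.
    have -> : H1 :|: H2 \subset arcs D.
      rewrite subUset; apply/andP; split; [apply: subset_trans s1 _ | apply: subset_trans s2 _];
        apply/subsetP => -[x y]; rewrite !inarcs /= /D.
        by move->.
      by case/and3P => -> -> _; rewrite orbT.
    apply: (@bal_union _ V1).
      by move=> p /(subsetP s1); rewrite inarcs => /d1V.
    move=> p /(subsetP s2); rewrite inarcs => /and3P[dp xK yK].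
    have [x2 y2] := andP (d2V _ _ dp).
    by rewrite !nKV.
  have sgU : forall H1 H2 : {set T * T}, H1 \subset arcs d1 -> H2 \subset arcs d2' ->
      (-1) ^+ #|H1 :|: H2| = (-1) ^+ #|H1| * (-1) ^+ #|H2| :> int.
    move=> H1 H2 s1 s2; rewrite cardsU.
    have -> : H1 :&: H2 = set0.
      apply/setP=> p; rewrite !inE; apply/negP => /andP[p1 p2].
      move: dis => /disjoint_setI0 /setP /(_ p).
      by rewrite in_setI in_set0 (subsetP s1 _ p1) (subsetP s2 _ p2).
    by rewrite cards0 subn0 exprD.
  have R : forall d : rel T, sgn d = \sum_(H : {set T * T} | H \subset arcs d)
                 (if eulerian d H then (-1) ^+ #|H| else 0).
    move=> d; rewrite /sgn -big_mkcondr; apply: eq_bigl => H.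
    by rewrite eulE andbA andbb.
  have SD : sgn D = sgn d1 * sgn d2'.
    rewrite /sgn (eq_bigl (fun H : {set T * T} => (H \subset arcs d1 :|: arcs d2') && eulerian D H)); last first.
      by move=> H; case e: (eulerian D H); rewrite ?andbF ?andbT // eulsub.
    rewrite big_mkcondr (sum_split _ dis) -/(sgn d1) -/(sgn d2') !R mulr_suml.
    apply: eq_bigr => H1 s1; rewrite mulr_sumr; apply: eq_bigr => H2 s2.
    rewrite euni // sgU //.
    by case: (eulerian d1 H1); case: (eulerian d2' H2); rewrite ?mul0r ?mulr0.
  by rewrite SD -S2 mulf_neq0 // -ATE.
- move=> x; case x1: (x \in V1).
    have -> : outdeg D x = outdeg d1 x by apply: eq_card => y; rewrite !inE DV1.
    exact: l1.
  have -> : outdeg D x = outdeg d2 x by apply: eq_card => y; rewrite !inE DnV1 ?x1.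
  by apply: l2; apply: inV2; rewrite x1.
- by move=> x x1; apply: eq_card => y; rewrite !inE DV1.
Qed.
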